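(* Let $G$ be a $4$-vertex-critical graph, and suppose $C$ is an induced cycle of $G$ such that every vertex of $C$ has degree exactly three in $G$. Then $C$ has odd length, and there is a $3$-coloring of $G-V(C)$ under which every vertex of the set $\left(\bigcup_{c \in V(C)} N_G(c)\right) \setminus V(C)$ receives the same color.
   Context: A $k$-coloring of a graph $G$ is a map $c:V(G)\to\{1,\dots,k\}$ with $c(x)\neq c(y)$ for every edge $xy$. A graph is $k$-chromatic if it is $k$-colorable but not $(k-1)$-colorable. A graph $G$ is $k$-vertex-critical if it is $k$-chromatic and every proper induced subgraph of $G$ is $(k-1)$-colorable. $G-V(C)$ is the subgraph induced by $V(G)\setminus V(C)$; $N_G(c)$ is the neighborhood of $c$ in $G$. *)

(* Defs.v *)
From mathcomp Require Import all_boot.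
Set Implicit Arguments. Unset Strict Implicit. Unset Printing Implicit Defensive.

Definition simple_graph (T : finType) (e : rel T) : Prop :=
  symmetric e /\ irreflexive e.

Definition proper_coloring_on (T : finType) (e : rel T) (k : nat)
    (S : {set T}) (c : T -> 'I_k) : Prop :=
  forall x y, x \in S -> y \in S -> e x y -> c x != c y.

Definition colorable_on (T : finType) (e : rel T) (k : nat) (S : {set T}) : Prop :=
  exists c : T -> 'I_k, proper_coloring_on e S c.

Definition k_colorable (T : finType) (e : rel T) (k : nat) : Prop :=
  colorable_on e k [set: T].

Definition k_chromatic (T : finType) (e : rel T) (k : nat) : Prop :=
  k_colorable e k /\ ~ k_colorable e k.-1.

Definition vertex_critical (T : finType) (e : rel T) (k : nat) : Prop :=
  k_chromatic e k /\
  forall S : {set T}, S \proper [set: T] -> colorable_on e k.-1 S.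

Definition degree (T : finType) (e : rel T) (x : T) : nat := #|[set y | e x y]|.

Definition induced_cycle (T : finType) (e : rel T) (s : seq T) : Prop :=
  [/\ uniq s, 3 <= size s, cycle e s &
      forall x y, x \in s -> y \in s -> e x y -> (y == next s x) || (y == prev s x)].

Definition outer_nbhd (T : finType) (e : rel T) (s : seq T) : {set T} :=
  [set y | [exists x : T, (x \in s) && e x y] & y \notin s].

(* Main.v *)
Require Import Defs.
From mathcomp Require Import all_boot.
From mathcomp Require Import zify.

Set Implicit Arguments. Unset Strict Implicit. Unset Printing Implicit Defensive.

Definition pick3 (u v : 'I_3) : 'I_3 :=
  odflt ord0 [pick w : 'I_3 | (w != u) && (w != v)].

Lemma pick3P u v : (pick3 u v != u) && (pick3 u v != v).
Proof.
rewrite /pick3; case: pickP => [w //|H].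
exfalso.
have H0 := H (@Ordinal 3 0 isT); have H1 := H (@Ordinal 3 1 isT);
have H2 := H (@Ordinal 3 2 isT).
move: H0 H1 H2; clear H.
case: u => [[|[|[|m]]] Hu] //; case: v => [[|[|[|k]]] Hk] //.
Qed.

Lemma pred2 m : 2 <= m -> m.-1 = (m.-2).+1.
Proof. by case: m => [|[|]]. Qed.

Section Comb.
Variable (n : nat) (F : nat -> 'I_3).

Fixpoint greedy (i : nat) : 'I_3 :=
  if i is j.+1 then pick3 (F j.+1) (greedy j) else F n.-1.

Lemma greedyP : 2 <= n -> F n.-1 != F 0 ->
  [/\ forall i, i < n -> greedy i != F i,
      forall i, i.+1 < n -> greedy i != greedy i.+1 &
      greedy n.-1 != greedy 0].
Proof.
move=> n2 Hd; split.
- by case=> [|i] _ //=; have /andP[] := pick3P (F i.+1) (greedy i).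
- move=> i _ /=; rewrite eq_sym; by have /andP[] := pick3P (F i.+1) (greedy i).
- rewrite [in greedy n.-1]pred2 //= -pred2 //.
  by have /andP[] := pick3P (F (n.-2).+1) (greedy n.-2); rewrite -pred2.
Qed.

Lemma evenP : 2 <= n -> ~~ odd n -> (forall i, i < n -> F i = F 0) ->
  exists g : nat -> 'I_3,
  [/\ forall i, i < n -> g i != F i,
      forall i, i.+1 < n -> g i != g i.+1 &
      g n.-1 != g 0].
Proof.
move=> n2 ev Hc.
set b1 := pick3 (F 0) (F 0); set b2 := pick3 (F 0) b1.
have /andP[h1 _] := pick3P (F 0) (F 0).
have /andP[h2 h12] := pick3P (F 0) b1.
exists (fun i => if odd i then b1 else b2); split.
- by move=> i /Hc ->; case: (odd i).
- by move=> i _ /=; case: (odd i) => //=; rewrite eq_sym.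
- rewrite pred2 //.
  have -> : odd (n.-2).+1 = true.
    by move: ev; case: n n2 {Hc} => [|[|m]] //=; rewrite negbK.
  by rewrite eq_sym.
Qed.

Lemma adjdiff : (exists i j, [/\ i < n, j < n & F i != F j]) ->
  F n.-1 != F 0 \/ exists i, i.+1 < n /\ F i != F i.+1.
Proof.
move=> [i [j [ilt jlt Hij]]].
case: (boolP [exists k : 'I_n, (k.+1 < n) && (F k != F k.+1)]).
  by case/existsP=> k /andP[k1 k2]; right; exists k.
move=> /existsPn Hn; exfalso.
have Hc : forall k, k < n -> F k = F 0.
  elim=> [//|k IH] kn.
  have kn' : k < n by apply: ltnW.
  have := Hn (Ordinal kn'); rewrite /= negb_and kn /= negbK => /eqP <-.
  exact: IH.
by move: Hij; rewrite Hc // Hc // eqxx.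
Qed.

End Comb.

Definition oc (T : finType) (e : rel T) (c : T -> 'I_3) (s : seq T) (x : T) : 'I_3 :=
  if [pick y | e x y && (y \notin s)] is Some y then c y else ord0.

Lemma oc_rot (T : finType) (e : rel T) c (s : seq T) k x :
  oc e c (rot k s) x = oc e c s x.
Proof.
rewrite /oc; congr (if _ is Some y then _ else _).
by apply: eq_pick => y; rewrite mem_rot.
Qed.

Lemma index_next (T : eqType) (s : seq T) x : uniq s -> x \in s ->
  index (next s x) s = if (index x s).+1 < size s then (index x s).+1 else 0.
Proof.
case: s => [//|z p] us xs.
rewrite next_nth xs.
have := xs; rewrite -index_mem => ilt.
case: ifP => Hi.
  have -> : nth z p (index x (z :: p)) = nth z (z :: p) (index x (z :: p)).+1 by [].
  by rewrite index_uniq.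
have -> : index x (z :: p) = size p.
  by move: ilt Hi => /=; lia.
by rewrite nth_default //= eqxx.
Qed.

Lemma L_col (T : finType) (e : rel T) (s : seq T) (c : T -> 'I_3) (x0 : T)
    (g : nat -> 'I_3) :
  symmetric e -> proper_coloring_on e (~: [set x in s]) c -> uniq s ->
  (forall x y, x \in s -> y \in s -> e x y -> (y == next s x) || (y == prev s x)) ->
  (forall x y, x \in s -> y \notin s -> e x y -> oc e c s x = c y) ->
  (forall i, i < size s -> g i != oc e c s (nth x0 s i)) ->
  (forall i, i.+1 < size s -> g i != g i.+1) ->
  g (size s).-1 != g 0 ->
  k_colorable e 3.
Proof.
move=> Hsym Hc us Hin Hoc Hg1 Hg2 Hg3.
have Hnext : forall x, x \in s -> g (index x s) != g (index (next s x) s).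
  move=> x xs; rewrite index_next //.
  have := xs; rewrite -index_mem => ilt.
  case: ifP => Hi; first exact: Hg2.
  have -> : index x s = (size s).-1 by move: ilt Hi; case: (size s) => [|m] //=; lia.
  exact: Hg3.
have Hout : forall x y, x \in s -> y \notin s -> e x y -> g (index x s) != c y.
  move=> x y xs ys exy; rewrite -(Hoc x y xs ys exy).
  have := Hg1 (index x s); rewrite index_mem nth_index //; exact.
exists (fun x => if x \in s then g (index x s) else c x).
move=> x y _ _ exy.
case: (boolP (x \in s)) => xs; case: (boolP (y \in s)) => ys.
- case/orP: (Hin x y xs ys exy) => /eqP ->; first exact: Hnext.
  rewrite eq_sym; have := Hnext (prev s x); rewrite next_prev // mem_prev; exact.
- exact: Hout.
- by rewrite eq_sym; apply: Hout => //; rewrite Hsym.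
- by apply: Hc => //; rewrite in_setC in_set.
Qed.

Lemma nth_rot0 (T : Type) (x0 : T) (s : seq T) k :
  k < size s -> nth x0 (rot k s) 0 = nth x0 s k.
Proof.
move=> ks; rewrite /rot nth_cat size_drop subn_gt0 ks nth_drop addn0 //.
Qed.

Lemma nth_rotl (T : Type) (x0 : T) (s : seq T) k :
  k < size s -> nth x0 (rot k.+1 s) (size s).-1 = nth x0 s k.
Proof.
move=> ks; rewrite /rot nth_cat size_drop.
have -> : ((size s).-1 < size s - k.+1) = false by apply/negbTE; rewrite -leqNgt; lia.
rewrite nth_take; last by lia.
congr nth; lia.
Qed.

Lemma idx2 i n : i < n -> 2 < n ->
  (if (if i.+1 < n then i.+1 else 0).+1 < n
   then (if i.+1 < n then i.+1 else 0).+1 else 0) = i -> False.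
Proof.
move=> H1 H2; case: (ltnP i.+1 n) => H3.
  case: (ltnP i.+2 n) => H4 E; lia.
by rewrite /=; case: (ltnP 1 n) => H4 E; lia.
Qed.

Theorem lemma5 (T : finType) (e : rel T) (s : seq T) :
  simple_graph e ->
  vertex_critical e 4 ->
  induced_cycle e s ->
  (forall x, x \in s -> degree e x = 3) ->
  odd (size s) /\
  exists c : T -> 'I_3,
    proper_coloring_on e (~: [set x in s]) c /\
    exists a : 'I_3, forall y, y \in outer_nbhd e s -> c y = a.
Proof.
move=> [Hsym Hirr] [[_ Hn3] Hcrit] [us s3 cyc Hin] Hdeg.
have Hn3' : ~ k_colorable e 3 := Hn3.
clear Hn3.
have [x0 x0s] : exists x0, x0 \in s.
  by case: s s3 {us cyc Hin Hdeg} => [|z p] //= _; exists z; rewrite inE eqxx.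
have [c Hc] : colorable_on e 3 (~: [set x in s]).
  apply: Hcrit; rewrite properT; apply/negP => /eqP H.
  have : x0 \in ~: [set x in s] by rewrite H inE.
  by rewrite inE inE x0s.
have HU : forall x y y', x \in s -> y \notin s -> y' \notin s -> e x y -> e x y' -> y = y'.
  move=> x y y' xs ys ys' exy exy'.
  case: (eqVneq y y') => // Hne; exfalso.
  have nxs : next s x \in s by rewrite mem_next.
  have pxs : prev s x \in s by rewrite mem_prev.
  have ny : next s x != y by apply/eqP=> E; move: ys; rewrite -E nxs.
  have ny' : next s x != y' by apply/eqP=> E; move: ys'; rewrite -E nxs.
  have py : prev s x != y by apply/eqP=> E; move: ys; rewrite -E pxs.
  have py' : prev s x != y' by apply/eqP=> E; move: ys'; rewrite -E pxs.
  have np : next s x != prev s x.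
    apply/eqP => E.
    have E2 : index (next s (next s x)) s = index x s by rewrite {1}E next_prev.
    rewrite index_next ?mem_next // index_next // in E2.
    have := xs; rewrite -index_mem => ilt.
    exact: (idx2 ilt s3 E2).
  have U : uniq [:: next s x; prev s x; y; y'].
    by rewrite /= !inE !negb_or np ny ny' py py' Hne.
  have := Hdeg x xs; rewrite /degree => Hd.
  have : #|[:: next s x; prev s x; y; y']| <= 3.
    rewrite -Hd; apply: subset_leq_card; apply/subsetP => z.
    rewrite !inE => /or4P[] /eqP ->.
    - exact: next_cycle.
    - by rewrite Hsym; apply: prev_cycle.
    - exact: exy.
    - exact: exy'.
  by move/card_uniqP: U => ->.
have Hoc : forall x y, x \in s -> y \notin s -> e x y -> oc e c s x = c y.
  move=> x y xs ys exy; rewrite /oc; case: pickP => [y' /andP[e1 n1]|H].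
    by rewrite (HU x y' y).
  by have := H y; rewrite exy ys.
set F := fun i => oc e c s (nth x0 s i).
have n2 : 2 <= size s by apply: leq_trans s3.
have NC : ~ exists i j, [/\ i < size s, j < size s & F i != F j].
  move=> Hex; case: (adjdiff Hex) => [Hd | [i [i1 Hd]]].
    have [G1 G2 G3] := greedyP n2 Hd.
    by apply: Hn3'; apply: (L_col (x0 := x0) Hsym Hc us Hin Hoc G1 G2 G3).
  set s' := rot i.+1 s.
  set F' := fun t => oc e c s' (nth x0 s' t).
  have Hs' : size s' = size s by rewrite size_rot.
  have Hd' : F' (size s).-1 != F' 0.
    rewrite /F' /s' !oc_rot nth_rotl ?nth_rot0 //; last by apply: ltnW.
  have [G1 G2 G3] := greedyP n2 Hd'.
  apply: Hn3'; apply: (L_col (s := s') (c := c) (x0 := x0) (g := greedy (size s) F') Hsym).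
  - by have -> : [set x in s'] = [set x in s] by apply/setP=> z; rewrite !inE mem_rot.
  - by rewrite rot_uniq.
  - move=> x y; rewrite !mem_rot (next_rot _ us) (prev_rot _ us); exact: Hin.
  - move=> x y; rewrite oc_rot !mem_rot; exact: Hoc.
  - by rewrite Hs'.
  - by rewrite Hs'.
  - by rewrite Hs'.
have s0 : 0 < size s by apply: leq_trans n2.
split.
  case: (boolP (odd (size s))) => // ev; exfalso.
  case: (boolP [forall i : 'I_(size s), F i == F 0]) => [/forallP Hcst | /forallPn [i Hi]].
    have [g [G1 G2 G3]] := evenP n2 ev (fun i (H : i < size s) => eqP (Hcst (Ordinal H))).
    by apply: Hn3'; apply: (L_col (x0 := x0) Hsym Hc us Hin Hoc G1 G2 G3).
  by apply: NC; exists i, 0; split.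
exists c; split; first exact: Hc.
exists (F 0) => y; rewrite inE => /andP[/existsP[x /andP[xs exy]] ys].
rewrite -(Hoc x y xs ys exy).
have -> : oc e c s x = F (index x s) by rewrite /F nth_index.
apply/eqP; apply/negPn/negP => H; apply: NC; exists (index x s), 0; split => //.
by rewrite index_mem.
Qed.
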